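(* Let $A, C, D$ be binary random variables, with $A$ taking values $a,\overline{a}$, $C$ taking values $c,\overline{c}$, $D$ taking values $d,\overline{d}$, and let $Y$ be a (discrete or continuous) real random variable with finite expectation. Suppose the joint distribution factorizes as \[ p(A,C,D,Y)=p(C)\,p(D\mid C)\,p(A\mid C)\,p(Y\mid A,C) \] (i.e. $C$ is a common cause of $A$ and $Y$, $A$ causes $Y$, and $D$ is a proxy of $C$, so that $D$ is conditionally independent of $(A,Y)$ given $C$). Assume that $C$ and $D$ are dependent, and that every event $\{A=x, C=y, D=z\}$ has positive probability. If $E[Y\mid A,D]$ is monotone in $D$, then $E[Y\mid A,C]$ is monotone in $C$.
   Context: $E[Y\mid A,D]$ is called nondecreasing in $D$ if $E[Y\mid a,d]\ge E[Y\mid a,\overline{d}]$ and $E[Y\mid \overline{a},d]\ge E[Y\mid \overline{a},\overline{d}]$; nonincreasing in $D$ if both inequalities are reversed ($\le$); and monotone in $D$ if it is nondecreasing or nonincreasing in $D$. The same definitions apply with $C$ (values $c,\overline{c}$) in place of $D$. *)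

(* Defs.v *)
From HB Require Import structures.
From mathcomp Require Import all_boot all_order all_algebra.
From mathcomp Require Import all_classical all_reals all_analysis.
Set Implicit Arguments. Unset Strict Implicit. Unset Printing Implicit Defensive.
Import Order.TTheory GRing.Theory Num.Theory.
Local Open Scope classical_set_scope.
Local Open Scope ring_scope.

Section Defs.
Context {d : measure_display} {T : measurableType d} {R : realType}.

Definition ev {V : Type} (X : T -> V) (x : V) : set T := [set t | X t = x].

Definition pr (P : probability T R) (B : set T) : R := fine (P B).

Definition cpr (P : probability T R) (B G : set T) : R := pr P (B `&` G) / pr P G.

Definition cexp (P : probability T R) (Y : T -> R) (G : set T) : R :=
  fine (\int[P]_(t in G) (Y t)%:E) / pr P G.

(* Binary variables take values in bool: true encodes a (resp. c, d),
   false encodes \overline{a} (resp. \overline{c}, \overline{d}). *)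
Definition nondecr_in (f : bool -> bool -> R) : Prop :=
  f false false <= f false true /\ f true false <= f true true.
Definition nonincr_in (f : bool -> bool -> R) : Prop :=
  f false true <= f false false /\ f true true <= f true false.
Definition monotone_in (f : bool -> bool -> R) : Prop :=
  nondecr_in f \/ nonincr_in f.

End Defs.

(* Main.v *)
Require Import Defs.
From HB Require Import structures.
From mathcomp Require Import all_boot all_order all_algebra.
From mathcomp Require Import all_classical all_reals all_analysis.
From mathcomp Require Import measurable_realfun.
From mathcomp.algebra_tactics Require Import ring lra.
Import Order.TTheory GRing.Theory Num.Theory.
Local Open Scope classical_set_scope.
Local Open Scope ring_scope.

Section H.
Context (d : measure_display) (T : measurableType d) (R : realType)
  (P : probability T R) (Y : T -> R) (mY : measurable_fun setT Y).
Local Open Scope ereal_scope.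

Lemma restr_int (G : set T) (mG : measurable G) (f : T -> \bar R) :
  measurable_fun setT f -> (forall x, 0 <= f x) ->
  \int[mrestr P mG]_(x in setT) f x = \int[P]_(x in G) f x.
Proof.
move=> mf f0.
have -> : [set: T] = G `|` ~` G by rewrite setUv.
rewrite ge0_integral_setU //; last first.
  all: try (by rewrite /disj_set setICr); try (by move=> ? ?; apply: f0);
    try (by rewrite setUv); try (exact: measurableC).
rewrite [X in _ + X]null_set_integral ?adde0; last first.
  all: try (by rewrite /mrestr setICl measure0); try (exact: measurable_funTS);
    try (exact: measurableC).
  by rewrite /= /mrestr setICl measure0.
apply: eq_measure_integral => A mA AG.
by rewrite /= /mrestr setIidl.
Qed.

Lemma int_scale (G H : set T) (mG : measurable G) (mH : measurable H)
  (c : {nonneg R}) (g : R -> \bar R) :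
  measurable_fun setT g -> (forall x, 0 <= g x) ->
  (forall B, measurable B -> P (G `&` H `&` Y @^-1` B) = c%:num%:E * P (G `&` Y @^-1` B)) ->
  \int[P]_(x in G `&` H) g (Y x) = c%:num%:E * \int[P]_(x in G) g (Y x).
Proof.
move=> mg g0 hB.
have mGH : measurable (G `&` H) by exact: measurableI.
have mgY : measurable_fun setT (g \o Y) by exact: measurableT_comp.
rewrite -(restr_int _ mGH) // -(restr_int _ mG) //.
rewrite -[in LHS](preimage_setT Y) -[in RHS](preimage_setT Y).
rewrite -!ge0_integral_pushforward //.
all: try (by move=> y ?; apply: g0); try (exact: measurable_funTS).
rewrite -ge0_integral_mscale //.
all: try (by move=> y ?; apply: g0); try (exact: measurable_funTS).
apply: eq_measure_integral => B mB _.
rewrite /mscale /pushforward /mrestr /=.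
rewrite /mscale /= /pushforward /mrestr.
by rewrite !(setIC (Y @^-1` B)) hB.
Qed.

Lemma int_scaleY (G H : set T) (mG : measurable G) (mH : measurable H)
  (c : R) (c0 : (0 <= c)%R) :
  P.-integrable setT (fun t => (Y t)%:E) ->
  (forall B, measurable B -> pr P (G `&` H `&` Y @^-1` B) = (c * pr P (G `&` Y @^-1` B))%R) ->
  fine (\int[P]_(x in G `&` H) (Y x)%:E) = (c * fine (\int[P]_(x in G) (Y x)%:E))%R.
Proof.
move=> iY hB.
pose cn : {nonneg R} := NngNum c0.
have mGH : measurable (G `&` H) by exact: measurableI.
have hB' : forall B, measurable B -> P (G `&` H `&` Y @^-1` B) = cn%:num%:E * P (G `&` Y @^-1` B).
  move=> B mB.
  have mYB : measurable (Y @^-1` B) by rewrite -[X in measurable X]setTI; exact: mY.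
  rewrite -(@fineK _ (P (G `&` H `&` _))); last exact: fin_num_measure (measurableI _ _ mGH mYB).
  rewrite -(@fineK _ (P (G `&` _))); last exact: fin_num_measure (measurableI _ _ mG mYB).
  by rewrite -EFinM; congr (_%:E); exact: hB.
have hp : \int[P]_(x in G `&` H) (fun t => (Y t)%:E)^\+ x =
    cn%:num%:E * \int[P]_(x in G) (fun t => (Y t)%:E)^\+ x.
  have mg : measurable_fun setT (fun y : R => maxe y%:E 0).
    have -> : (fun y : R => maxe y%:E 0) = (@EFin R)^\+ by apply/funext => y; rewrite funeposE.
    exact: (measurable_funepos (@EFin_measurable R setT)).
  have -> : (fun t => (Y t)%:E)^\+ = (fun x => (fun y => maxe y%:E 0) (Y x)) by apply/funext => y; rewrite funeposE.
  have g0 : forall y : R, 0 <= maxe y%:E 0 by move=> y; rewrite le_max lexx orbT.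
  exact: (@int_scale G H mG mH cn (fun y => maxe y%:E 0) mg g0 hB').
have hn : \int[P]_(x in G `&` H) (fun t => (Y t)%:E)^\- x =
    cn%:num%:E * \int[P]_(x in G) (fun t => (Y t)%:E)^\- x.
  have mg : measurable_fun setT (fun y : R => maxe (- y%:E) 0).
    have -> : (fun y : R => maxe (- y%:E) 0) = (@EFin R)^\- by apply/funext => y; rewrite funenegE.
    exact: (measurable_funeneg (@EFin_measurable R setT)).
  have -> : (fun t => (Y t)%:E)^\- = (fun x => (fun y => maxe (- y%:E) 0) (Y x)) by apply/funext => y; rewrite funenegE.
  have g0 : forall y : R, 0 <= maxe (- y%:E) 0 by move=> y; rewrite le_max lexx orbT.
  exact: (@int_scale G H mG mH cn (fun y => maxe (- y%:E) 0) mg g0 hB').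
have iG : P.-integrable G (fun t => (Y t)%:E) by exact: integrableS iY.
rewrite integralE hp hn [in RHS]integralE.
rewrite -(fineK (integrable_pos_fin_num mG iG)) -(fineK (integrable_neg_fin_num mG iG)).
by rewrite -!EFinM -!EFinB /= mulrBr.
Qed.

Lemma pr_ge0 (S : set T) : (0 <= pr P S)%R.
Proof. exact: fine_ge0 (measure_ge0 P S). Qed.

Lemma pr_le (S1 S2 : set T) : measurable S1 -> measurable S2 -> S1 `<=` S2 ->
  (pr P S1 <= pr P S2)%R.
Proof.
move=> m1 m2 s12; apply: fine_le; [exact: fin_num_measure|exact: fin_num_measure|].
by apply: le_measure => //; rewrite inE.
Qed.

Lemma ev_split (X : T -> bool) (S : set T) :
  S = (S `&` ev X true) `|` (S `&` ev X false).
Proof.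
rewrite -setIUr; apply/esym/setIidl => t _ /=; rewrite /ev /=.
by case: (X t); [left|right].
Qed.

Lemma ev_disj (X : T -> bool) (S : set T) :
  (S `&` ev X true) `&` (S `&` ev X false) = set0.
Proof.
by apply/seteqP; split => t //= [[_ h1] [_ h0]]; move: h1 h0; rewrite /ev /= => ->.
Qed.

Lemma pr_split (X : T -> bool) (mX : forall b, measurable (ev X b)) (S : set T) :
  measurable S -> pr P S = (pr P (S `&` ev X true) + pr P (S `&` ev X false))%R.
Proof.
move=> mS.
have m1 : measurable (S `&` ev X true) by exact: measurableI.
have m0 : measurable (S `&` ev X false) by exact: measurableI.
rewrite {1}(ev_split X S) /pr measureU //; last exact: ev_disj.
by rewrite fineD //; exact: fin_num_measure.
Qed.

Lemma int_split (X : T -> bool) (mX : forall b, measurable (ev X b)) (S : set T) :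
  P.-integrable setT (fun t => (Y t)%:E) ->
  measurable S -> fine (\int[P]_(t in S) (Y t)%:E) =
   (fine (\int[P]_(t in S `&` ev X true) (Y t)%:E) + fine (\int[P]_(t in S `&` ev X false) (Y t)%:E))%R.
Proof.
move=> iY mS.
have m1 : measurable (S `&` ev X true) by exact: measurableI.
have m0 : measurable (S `&` ev X false) by exact: measurableI.
have mYE : measurable_fun setT (fun t => (Y t)%:E) by exact: measurableT_comp.
rewrite {1}(ev_split X S) integral_setU //; last 2 first.
- exact: measurable_funTS.
- by rewrite /disj_set ev_disj.
rewrite fineD //; apply: integrable_fin_num => //; exact: integrableS iY.
Qed.
End H.

Lemma alg (R : realType) (P1 P0 J1 J0 a b : R) : 0 < P1 -> 0 < P0 -> 0 < a -> 0 < b ->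
  0 < 1 - a -> 0 < 1 - b ->
  (a*J1 + b*J0)/(a*P1 + b*P0) - ((1-a)*J1 + (1-b)*J0)/((1-a)*P1+(1-b)*P0) =
  (J1/P1 - J0/P0) * (P1*P0*(a-b)/((a*P1+b*P0)*((1-a)*P1+(1-b)*P0))).
Proof.
move=> p1 p0 ha hb ha' hb'.
have d1 : a*P1 + b*P0 != 0 by apply/lt0r_neq0; nra.
have d0 : (1-a)*P1 + (1-b)*P0 != 0 by apply/lt0r_neq0; nra.
field; rewrite ?d1 ?d0 ?lt0r_neq0 //.
Qed.

Lemma sgn (R : realType) (dE dm K : R) : dE = dm * K ->
  (0 < K -> 0 <= dE -> 0 <= dm) /\ (0 < K -> dE <= 0 -> dm <= 0) /\
  (K < 0 -> 0 <= dE -> dm <= 0) /\ (K < 0 -> dE <= 0 -> 0 <= dm).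
Proof. move=> ->; split; [|split; [|split]] => h1 h2; nra. Qed.

Theorem theorem1 (d : measure_display) (T : measurableType d) (R : realType)
  (P : probability T R) (A C D : T -> bool) (Y : T -> R)
  (mA : forall x, measurable (ev A x))
  (mC : forall y, measurable (ev C y))
  (mD : forall z, measurable (ev D z))
  (mY : measurable_fun setT Y)
  (iY : P.-integrable setT (fun t => (Y t)%:E))
  (* p(A,C,D,Y) = p(C) p(D|C) p(A|C) p(Y|A,C) *)
  (fact : forall (x y z : bool) (B : set R), measurable B ->
     pr P (ev A x `&` ev C y `&` ev D z `&` (Y @^-1` B)) =
       pr P (ev C y) * cpr P (ev D z) (ev C y) * cpr P (ev A x) (ev C y)
       * cpr P (Y @^-1` B) (ev A x `&` ev C y))
  (* C and D are dependent *)
  (dep : exists y z, pr P (ev C y `&` ev D z) <> pr P (ev C y) * pr P (ev D z))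
  (* positivity *)
  (pos : forall x y z, 0 < pr P (ev A x `&` ev C y `&` ev D z)) :
  monotone_in (fun x z => cexp P Y (ev A x `&` ev D z)) ->
  monotone_in (fun x y => cexp P Y (ev A x `&` ev C y)).
Proof.
move=> hmon.
have mAC x y : measurable (ev A x `&` ev C y) by exact: measurableI.
have mACD x y z : measurable (ev A x `&` ev C y `&` ev D z) by exact: measurableI.
have mAD x z : measurable (ev A x `&` ev D z) by exact: measurableI.
have pAC x y : 0 < pr P (ev A x `&` ev C y).
  apply: (lt_le_trans (pos x y true)); apply: pr_le => //; exact: subIsetl.
have pC y : 0 < pr P (ev C y).
  apply: (lt_le_trans (pAC true y)); apply: pr_le => //; exact: subIsetr.
pose q := fun z y => pr P (ev D z `&` ev C y) / pr P (ev C y).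
have q0 z y : 0 <= q z y by apply: divr_ge0; [exact: pr_ge0| exact: ltW].
have hq x y z B : measurable B -> pr P (ev A x `&` ev C y `&` ev D z `&` Y @^-1` B) =
    q z y * pr P (ev A x `&` ev C y `&` Y @^-1` B).
  move=> mB; rewrite fact // /cpr /q (setIC (Y @^-1` B)).
  have := pC y; have := pAC x y => h1 h2.
  field; rewrite ?lt0r_neq0 //.
have hp x y z : pr P (ev A x `&` ev C y `&` ev D z) = q z y * pr P (ev A x `&` ev C y).
  by have := hq x y z setT measurableT; rewrite preimage_setT !setIT.
have hqpos z y : 0 < q z y.
  have := pos true y z; rewrite hp => h; have := pAC true y; have := q0 z y; nra.
have hJ x y z : fine (\int[P]_(t in ev A x `&` ev C y `&` ev D z) (Y t)%:E) =
    q z y * fine (\int[P]_(t in ev A x `&` ev C y) (Y t)%:E).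
  apply: int_scaleY => //; exact: hq.
have hq01 y : q false y = 1 - q true y.
  have e := @pr_split _ _ _ P D mD (ev C y) (mC y).
  rewrite /q !(setIC (ev D _)).
  have -> : pr P (ev C y `&` ev D false) = pr P (ev C y) - pr P (ev C y `&` ev D true).
    by rewrite e; ring.
  have := pC y => h; field; exact: lt0r_neq0.
have hDC z y : pr P (ev D z `&` ev C y) = q z y * pr P (ev C y).
  by rewrite /q divfK // lt0r_neq0.
have hqneq : q true true != q true false.
  apply/eqP => eqq; case: dep => y [z]; apply.
  have hqi z' : q z' true = q z' false.
    by case: z'; [exact: eqq| rewrite !hq01 eqq].
  have hsum : pr P (ev C true) + pr P (ev C false) = 1.
    have := @pr_split _ _ _ P C mC setT measurableT; rewrite !setTI => <-.
    by rewrite /pr probability_setT.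
  have hDz : pr P (ev D z) = q z true.
    rewrite (@pr_split _ _ _ P C mC (ev D z) (mD z)) !hDC -hqi -mulrDr hsum.
    by rewrite mulr1.
  rewrite setIC hDC hDz; case: y; first by rewrite mulrC.
  by rewrite -hqi mulrC.
pose J x y := fine (\int[P]_(t in ev A x `&` ev C y) (Y t)%:E).
pose PA x y := pr P (ev A x `&` ev C y).
have hE x z : cexp P Y (ev A x `&` ev D z) =
    (q z true * J x true + q z false * J x false) /
    (q z true * PA x true + q z false * PA x false).
  rewrite /cexp (@int_split _ _ _ P Y mY C mC _ iY (mAD x z)).
  rewrite (@pr_split _ _ _ P C mC _ (mAD x z)).
  rewrite (setIAC (ev A x) (ev D z) (ev C true)) (setIAC (ev A x) (ev D z) (ev C false)).
  by rewrite !hJ !hp.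
have hm x y : cexp P Y (ev A x `&` ev C y) = J x y / PA x y by [].
pose a := q true true; pose b := q true false.
pose K x := PA x true * PA x false * (a - b) /
   ((a * PA x true + b * PA x false) * ((1 - a) * PA x true + (1 - b) * PA x false)).
have key x : cexp P Y (ev A x `&` ev D true) - cexp P Y (ev A x `&` ev D false) =
    (cexp P Y (ev A x `&` ev C true) - cexp P Y (ev A x `&` ev C false)) * K x.
  rewrite !hE !hm !hq01; apply: alg => //; try exact: pAC.
  - by rewrite -hq01.
  - by rewrite -hq01.
have den x : 0 < (a * PA x true + b * PA x false) * ((1 - a) * PA x true + (1 - b) * PA x false).
  have h1 := hqpos true true; have h2 := hqpos true false.
  have h3 := hqpos false true; have h4 := hqpos false false.
  rewrite !hq01 in h3 h4.
  have := pAC x true; have := pAC x false; rewrite /a /b /PA => p1 p0.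
  apply: mulr_gt0; nra.
have [ab|ab] : a < b \/ b < a.
  by move: hqneq; rewrite neq_lt => /orP.
- have Kn x : K x < 0.
    rewrite /K ltr_pdivrMr // mul0r pmulr_rlt0 ?subr_lt0 //.
    exact: mulr_gt0 (pAC x true) (pAC x false).
  have k0 := key false; have k1 := key true.
  have K0 := Kn false; have K1 := Kn true.
  case: hmon => -[h0 h1] /=; rewrite /= in h0 h1.
  + by right; split => /=; nra.
  + by left; split => /=; nra.
- have Kp x : 0 < K x.
    rewrite /K divr_gt0 // mulr_gt0 ?subr_gt0 //.
    exact: mulr_gt0 (pAC x true) (pAC x false).
  have k0 := key false; have k1 := key true.
  have K0 := Kp false; have K1 := Kp true.
  case: hmon => -[h0 h1] /=; rewrite /= in h0 h1.
  + by left; split => /=; nra.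
  + by right; split => /=; nra.
Qed.
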